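(* Let $\beta>0$, $\beta_a>0$, $\alpha>0$ and $x_a\in[0,1]$, and consider the planar system on $\Gamma=[0,x_a]\times[0,1-x_a]$ \[ \frac{di_a}{dt}=F_a(i_a,i_r)\triangleq \beta(x_a-i_a)(i_a+i_r)-\beta_a(x_a-i_a)i_a-\alpha i_a, \qquad \frac{di_r}{dt}=F_r(i_a,i_r)\triangleq \beta(1-x_a-i_r)(i_a+i_r)-\beta_a(x_a-i_a)i_r-\alpha i_r, \] with initial condition $(i_a(0),i_r(0))\in\Gamma$. Then: (1) The infection-free equilibrium $(0,0)$ is globally asymptotically stable with respect to $\Gamma$ if and only if $\frac{\beta}{\alpha}\le 1+\frac{\beta_a x_a}{\alpha}$. (2) When $\frac{\beta}{\alpha}> 1+\frac{\beta_a x_a}{\alpha}$, there exists a unique interior equilibrium \[ \boldsymbol{i}^*=\Big(x_a\frac{\lambda_+}{\lambda_++\alpha},\;(1-x_a)\frac{\lambda_+}{\lambda_++\alpha}\Big),\qquad \lambda_+\triangleq \beta-\beta_a x_a-\alpha, \] and it is globally asymptotically stable with respect to $\Gamma$.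
   Context: This is the A-SIS model: a population of cyber nodes, a fixed fraction $x_a$ of which are active defenders; $i_a$ (resp. $i_r$) is the fraction of nodes that are infected active defenders (resp. infected non-active nodes), and $i=i_a+i_r$ is the total infected fraction. Let $\mathcal{E}=\{\boldsymbol{i}\in\Gamma: F_a(\boldsymbol{i})=F_r(\boldsymbol{i})=0\}$ be the set of equilibria. An equilibrium $\boldsymbol{i}^*\in\Gamma$ is called globally asymptotically stable with respect to $\Gamma$ if for every initial condition $\boldsymbol{i}_0\in\Gamma\setminus\mathcal{E}$ the solution $\boldsymbol{i}(t)$ converges to $\boldsymbol{i}^*$ as $t\to\infty$. An equilibrium is called interior if it lies in $(0,x_a)\times(0,1-x_a)$. *)

(* Defs.v *)
From Stdlib Require Import Reals.
From Coquelicot Require Import Coquelicot.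
Open Scope R_scope.

Definition Fa (beta betaa alpha xa ia ir : R) : R :=
  beta * (xa - ia) * (ia + ir) - betaa * (xa - ia) * ia - alpha * ia.

Definition Fr (beta betaa alpha xa ia ir : R) : R :=
  beta * (1 - xa - ir) * (ia + ir) - betaa * (xa - ia) * ir - alpha * ir.

Definition inGamma (xa ia ir : R) : Prop :=
  0 <= ia <= xa /\ 0 <= ir <= 1 - xa.

Definition interior_pt (xa ia ir : R) : Prop :=
  0 < ia < xa /\ 0 < ir < 1 - xa.

Definition is_equilibrium (beta betaa alpha xa ia ir : R) : Prop :=
  inGamma xa ia ir /\ Fa beta betaa alpha xa ia ir = 0 /\ Fr beta betaa alpha xa ia ir = 0.

Definition is_solution (beta betaa alpha xa : R) (ia ir : R -> R) : Prop :=
  (forall t, 0 < t ->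
     is_derive ia t (Fa beta betaa alpha xa (ia t) (ir t)) /\
     is_derive ir t (Fr beta betaa alpha xa (ia t) (ir t))) /\
  filterlim ia (at_right 0) (locally (ia 0)) /\
  filterlim ir (at_right 0) (locally (ir 0)).

Definition GAS (beta betaa alpha xa ea er : R) : Prop :=
  is_equilibrium beta betaa alpha xa ea er /\
  forall ia ir : R -> R,
    is_solution beta betaa alpha xa ia ir ->
    inGamma xa (ia 0) (ir 0) ->
    ~ is_equilibrium beta betaa alpha xa (ia 0) (ir 0) ->
    is_lim ia p_infty ea /\ is_lim ir p_infty er.

(* Main.v *)
Require Import Defs.
From Stdlib Require Import Reals Lra.
From Coquelicot Require Import Coquelicot.
Open Scope R_scope.


Lemma deq (f : R -> R) (x l l0 : R) : is_derive f x l -> l = l0 -> is_derive f x l0.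
Proof. intros H ->; exact H. Qed.
Lemma dplus (f g : R -> R) x a b : is_derive f x a -> is_derive g x b ->
  is_derive (fun t => f t + g t) x (a + b).
Proof. intros; apply (is_derive_plus f g); auto. Qed.
Lemma dminus (f g : R -> R) x a b : is_derive f x a -> is_derive g x b ->
  is_derive (fun t => f t - g t) x (a - b).
Proof. intros; apply (is_derive_minus f g); auto. Qed.
Lemma dopp (f : R -> R) x a : is_derive f x a ->
  is_derive (fun t => - f t) x (- a).
Proof. intros; apply (is_derive_opp f); auto. Qed.
Lemma dmult (f g : R -> R) x a b : is_derive f x a -> is_derive g x b ->
  is_derive (fun t => f t * g t) x (a * g x + f x * b).
Proof. intros; apply (is_derive_mult f g); auto. intros; apply Rmult_comm. Qed.
Lemma dinv (f : R -> R) x a : is_derive f x a -> f x <> 0 ->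
  is_derive (fun t => / f t) x (- a / f x ^ 2).
Proof. intros; apply (is_derive_inv f); auto. Qed.
Lemma dexp (f : R -> R) x a : is_derive f x a ->
  is_derive (fun t => exp (f t)) x (a * exp (f x)).
Proof. intros H. eapply deq. apply (is_derive_comp exp f). apply is_derive_exp. exact H.
  simpl. unfold scal; simpl; unfold mult; simpl. ring. Qed.
Lemma dconst (c : R) x : is_derive (fun _ => c) x 0.
Proof. apply (is_derive_const (K:=R_AbsRing) (V:=R_NormedModule) c). Qed.
Lemma did x : is_derive (fun t => t) x 1.
Proof. apply (is_derive_id (K:=R_AbsRing)). Qed.

Ltac dtac := repeat first
  [ eassumption | apply dconst | apply did | apply dexp | apply dinv
  | apply dminus | apply dplus | apply dopp | apply dmult ].

Lemma cplus (f g : R -> R) x : continuous f x -> continuous g x -> continuous (fun t => f t + g t) x.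
Proof. intros; apply (continuous_plus f g); auto. Qed.
Lemma cminus (f g : R -> R) x : continuous f x -> continuous g x -> continuous (fun t => f t - g t) x.
Proof. intros; apply (continuous_minus f g); auto. Qed.
Lemma copp (f : R -> R) x : continuous f x -> continuous (fun t => - f t) x.
Proof. intros; apply (continuous_opp f); auto. Qed.
Lemma cmult (f g : R -> R) x : continuous f x -> continuous g x -> continuous (fun t => f t * g t) x.
Proof. intros; apply (continuous_mult f g); auto. Qed.
Lemma cinv (f : R -> R) x : continuous f x -> f x <> 0 -> continuous (fun t => / f t) x.
Proof. intros; apply (continuous_Rinv_comp f); auto. Qed.
Lemma cexp (f : R -> R) x : continuous f x -> continuous (fun t => exp (f t)) x.
Proof. intros; apply (continuous_exp_comp f); auto. Qed.
Lemma cconst (c : R) (x : R) : continuous (fun _ : R => c) x.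
Proof. apply (continuous_const (U:=R_UniformSpace) (V:=R_UniformSpace)). Qed.
Lemma cid (x : R) : continuous (fun t : R => t) x.
Proof. apply (continuous_id (U:=R_UniformSpace)). Qed.

Ltac ctac := repeat match goal with
  | |- continuous (fun _ => ?c) _ => apply cconst
  | |- continuous (fun t => t) _ => apply cid
  | |- continuous (fun t => exp _) _ => apply cexp
  | |- continuous (fun t => / _) _ => apply cinv
  | |- continuous (fun t => _ / _) _ => unfold Rdiv
  | |- continuous (fun t => _ - _) _ => apply cminus
  | |- continuous (fun t => _ + _) _ => apply cplus
  | |- continuous (fun t => - _) _ => apply copp
  | |- continuous (fun t => _ * _) _ => apply cmult
  | |- continuous (Rmult ?c) ?x => apply (cmult (fun _ => c) (fun t => t) x); [apply cconst | apply cid]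
  | |- continuous (Rplus ?c) ?x => apply (cplus (fun _ => c) (fun t => t) x); [apply cconst | apply cid]
  | |- continuous _ _ => solve [eauto]
  | |- _ <> 0 => solve [eauto]
  end.

Lemma mono (f df : R -> R) a b : a <= b ->
  (forall x, a < x < b -> is_derive f x (df x)) ->
  (forall x, a <= x <= b -> continuous f x) ->
  (forall x, a <= x <= b -> 0 <= df x) -> f a <= f b.
Proof.
  intros hab hd hc hs.
  assert (h1 : forall x, Rmin a b < x < Rmax a b -> is_derive f x (df x)).
  { rewrite Rmin_left by lra; rewrite Rmax_right by lra; auto. }
  assert (h2 : forall x, Rmin a b <= x <= Rmax a b -> continuity_pt f x).
  { intros x hx. apply continuity_pt_filterlim. apply hc.
    rewrite Rmin_left in hx by lra; rewrite Rmax_right in hx by lra. auto. }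
  destruct (MVT_gen f a b df h1 h2) as [c [hc1 hc2]].
  { rewrite Rmin_left in hc1 by lra; rewrite Rmax_right in hc1 by lra.
    pose proof (hs c hc1). nra. }
Qed.

Lemma constf (f df : R -> R) a b : a <= b ->
  (forall x, a < x < b -> is_derive f x (df x)) ->
  (forall x, a <= x <= b -> continuous f x) ->
  (forall x, a <= x <= b -> df x = 0) -> f a = f b.
Proof.
  intros hab hd hc hs.
  assert (h1 : forall x, Rmin a b < x < Rmax a b -> is_derive f x (df x)).
  { rewrite Rmin_left by lra; rewrite Rmax_right by lra; auto. }
  assert (h2 : forall x, Rmin a b <= x <= Rmax a b -> continuity_pt f x).
  { intros x hx. apply continuity_pt_filterlim. apply hc.
    rewrite Rmin_left in hx by lra; rewrite Rmax_right in hx by lra. auto. }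
  destruct (MVT_gen f a b df h1 h2) as [c [hc1 hc2]].
  { rewrite Rmin_left in hc1 by lra; rewrite Rmax_right in hc1 by lra.
    rewrite hs in hc2 by auto. lra. }
Qed.

Lemma RmaxRmax t : Rmax 0 (Rmax 0 t) = Rmax 0 t.
Proof. unfold Rmax; repeat destruct Rle_dec; lra. Qed.

Lemma ext_cont (f : R -> R) :
  (forall t, 0 < t -> ex_derive f t) ->
  filterlim f (at_right 0) (locally (f 0)) ->
  forall t, continuous (fun u => f (Rmax 0 u)) t.
Proof.
  intros hd hr t.
  destruct (Rlt_dec 0 t) as [ht|ht].
  - apply continuous_ext_loc with f.
    + exists (mkposreal t ht). intros y hy. rewrite Rmax_right; auto.
      apply Rabs_lt_between' in hy. simpl in hy. lra.
    + apply (ex_derive_continuous (K:=R_AbsRing) (V:=R_NormedModule)). auto.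
  - destruct (Rlt_dec t 0) as [ht'|ht'].
    + apply continuous_ext_loc with (fun _ => f 0).
      * exists (mkposreal (-t) ltac:(lra)). intros y hy. rewrite Rmax_left; auto.
        apply Rabs_lt_between' in hy. simpl in hy. lra.
      * apply continuous_const.
    + assert (t = 0) by lra. subst t.
      unfold continuous; rewrite Rmax_left by lra.
      apply filterlim_locally. intros eps.
      pose proof (proj1 (filterlim_locally f (f 0)) hr eps) as HH.
      destruct HH as [d hd0]. exists d. intros y hy.
      destruct (Rle_dec y 0).
      * rewrite Rmax_left by lra. apply ball_center.
      * rewrite Rmax_right by lra. apply hd0; auto. lra.
Qed.

Lemma RInt_der (a : R -> R) : (forall u, continuous a u) ->
  forall u, is_derive (fun v => RInt a 0 v) u (a u).
Proof.
  intros ha u. apply (is_derive_RInt a (fun v => RInt a 0 v) 0 u); auto.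
  exists (mkposreal 1 Rlt_0_1). intros v _. apply (RInt_correct a 0 v).
  apply ex_RInt_continuous. intros; auto.
Qed.

Lemma lin_pos (y a b : R -> R) t : (forall u, continuous y u) -> (forall u, continuous a u) ->
  (forall u, 0 < u -> is_derive y u (a u * y u + b u)) ->
  (forall u, 0 <= u -> 0 <= b u) -> 0 <= t -> y 0 <= y t * exp (- RInt a 0 t).
Proof.
  intros hy ha hd hb ht.
  pose proof (RInt_der a ha) as hA.
  set (A := fun v => RInt a 0 v) in *.
  assert (hA0 : A 0 = 0). { unfold A. rewrite RInt_point. reflexivity. }
  assert (hcA : forall u, continuous A u).
  { intros u. apply (ex_derive_continuous (K:=R_AbsRing) (V:=R_NormedModule)).
    eexists; apply hA. }
  replace (y 0) with (y 0 * exp (- A 0)) by (rewrite hA0, Ropp_0, exp_0; ring).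
  apply (mono (fun u => y u * exp (- A u)) (fun u => b u * exp (- A u))); auto.
  - intros x hx. eapply deq. apply dmult. apply hd; lra. apply dexp. apply dopp. apply hA.
    cbv beta. match goal with |- ?a = ?b => change (@eq R a b) end. ring.
  - intros x _. ctac.
  - intros x hx. apply Rmult_le_pos. apply hb; lra. left; apply exp_pos.
Qed.

Ltac req := cbv beta; match goal with |- ?a = ?b => change (@eq R a b) end.

Lemma Rmax00 : Rmax 0 0 = 0.
Proof. unfold Rmax; destruct Rle_dec; reflexivity. Qed.

Lemma le_div a b c : 0 < c -> a * c <= b -> a <= b / c.
Proof. intros hc h. apply (Rmult_le_reg_r c); auto. unfold Rdiv. rewrite Rmult_assoc, Rinv_l; lra. Qed.

Lemma exp_neg_le1 x : 0 <= x -> 0 < exp (- x) <= 1.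
Proof. intros. split. apply exp_pos. rewrite <- exp_0.
  destruct (Req_dec x 0) as [->|h]. rewrite Ropp_0; lra. left; apply exp_increasing. lra. Qed.

Lemma pos_of_prod a b : 0 < a -> 0 <= a * b -> 0 <= b.
Proof. intros ha h. destruct (Rle_lt_dec 0 b); auto.
  assert (a * b < 0) by (apply Rmult_pos_neg; auto). lra. Qed.

Lemma convex_nonneg a b e : 0 <= a -> 0 <= b -> 0 <= e <= 1 -> 0 <= (1 - e) * a + e * b.
Proof. intros. apply Rplus_le_le_0_compat; apply Rmult_le_pos; lra. Qed.

Lemma setup beta betaa alpha xa ia ir :
  0 < beta -> 0 < betaa -> 0 < alpha -> 0 <= xa <= 1 ->
  is_solution beta betaa alpha xa ia ir -> inGamma xa (ia 0) (ir 0) ->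
  ~ is_equilibrium beta betaa alpha xa (ia 0) (ir 0) ->
  exists (S : R -> R) (r0 : R),
  (forall t, continuous S t) /\
  (forall t, 0 <= t -> 0 < S t <= 1) /\
  -1 <= r0 <= 1 /\
  (forall t, 0 <= t -> ia t = S t * (xa + r0 * exp (- (beta * t))) /\
                      ir t = S t * (1 - xa - r0 * exp (- (beta * t)))) /\
  (forall t, 0 < t -> is_derive S t
     (S t * ((beta - betaa * xa - alpha) - (beta - betaa * xa) * S t
             + betaa * (r0 * exp (- (beta * t))) * S t))).
Proof.
  intros hb hba hal hxa [Hd [Hca Hcr]] HG HnE.
  pose (ja := fun t => ia (Rmax 0 t)).
  pose (jr := fun t => ir (Rmax 0 t)).
  assert (Cja : forall t, continuous ja t).
  { apply ext_cont; auto. intros t ht. eexists. apply (proj1 (Hd t ht)). }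
  assert (Cjr : forall t, continuous jr t).
  { apply ext_cont; auto. intros t ht. eexists. apply (proj2 (Hd t ht)). }
  assert (Ea : forall t, 0 <= t -> ja t = ia t).
  { intros t ht. unfold ja. rewrite Rmax_right; auto. }
  assert (Er : forall t, 0 <= t -> jr t = ir t).
  { intros t ht. unfold jr. rewrite Rmax_right; auto. }
  assert (Ma : forall t, ja t = ja (Rmax 0 t)).
  { intros t. unfold ja. rewrite RmaxRmax. auto. }
  assert (Mr : forall t, jr t = jr (Rmax 0 t)).
  { intros t. unfold jr. rewrite RmaxRmax. auto. }
  assert (Dja : forall t, 0 < t -> is_derive ja t (Fa beta betaa alpha xa (ja t) (jr t))).
  { intros t ht. rewrite (Ea t), (Er t) by lra.
    apply is_derive_ext_loc with ia. exists (mkposreal t ht). intros y hy.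
    apply Rabs_lt_between' in hy. simpl in hy. unfold ja. rewrite Rmax_right; auto; lra.
    first [apply (proj1 (Hd t ht)) | apply (proj2 (Hd t ht))]. }
  assert (Djr : forall t, 0 < t -> is_derive jr t (Fr beta betaa alpha xa (ja t) (jr t))).
  { intros t ht. rewrite (Ea t), (Er t) by lra.
    apply is_derive_ext_loc with ir. exists (mkposreal t ht). intros y hy.
    apply Rabs_lt_between' in hy. simpl in hy. unfold jr. rewrite Rmax_right; auto; lra.
    first [apply (proj1 (Hd t ht)) | apply (proj2 (Hd t ht))]. }
  assert (ja0 : ja 0 = ia 0) by (apply Ea; lra).
  assert (jr0 : jr 0 = ir 0) by (apply Er; lra).
  clearbody ja jr.
  destruct HG as [[Ga1 Ga2] [Gr1 Gr2]].
  set (k := beta - betaa * xa).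
  set (lam := beta - betaa * xa - alpha).
  pose (S := fun t => ja t + jr t).
  assert (CS : forall t, continuous S t) by (intros; unfold S; ctac).
  assert (S0 : 0 < S 0).
  { unfold S. rewrite ja0, jr0.
    destruct (Rle_lt_or_eq_dec 0 (ia 0 + ir 0)) as [h|h]; [lra|lra|].
    exfalso. apply HnE. assert (ia 0 = 0) by lra. assert (ir 0 = 0) by lra.
    split. split; lra. unfold Fa, Fr. rewrite H, H0. split; ring. }
  assert (Spos : forall t, 0 < S t).
  { intros t. assert (S t = S (Rmax 0 t)) as -> by (unfold S; rewrite <- Ma, <- Mr; auto).
    assert (h : 0 <= Rmax 0 t) by apply Rmax_l.
    pose proof (lin_pos S (fun u => k * (1 - S u) - alpha + betaa * (ja u - xa * S u))
                  (fun _ => 0) (Rmax 0 t) CS) as HL.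
    assert (HL' : S 0 <= S (Rmax 0 t) * exp (- RInt (fun u => k * (1 - S u) - alpha + betaa * (ja u - xa * S u)) 0 (Rmax 0 t))).
    { apply HL; auto.
      - intros u. unfold S. ctac.
      - intros u hu. unfold S. eapply deq. apply dplus; [apply Dja|apply Djr]; auto.
        unfold Fa, Fr, k. req. ring.
      - intros; lra. }
    pose proof (exp_pos (- RInt (fun u => k * (1 - S u) - alpha + betaa * (ja u - xa * S u)) 0 (Rmax 0 t))).
    nra. }
  assert (Snz : forall t, S t <> 0) by (intros t; pose proof (Spos t); lra).
  pose (r := fun t => (ja t - xa * S t) / S t).
  assert (Cr : forall t, continuous r t).
  { intros t. unfold r, Rdiv. apply cmult. unfold S; ctac. apply cinv; auto. }
  assert (Dr : forall t, 0 < t -> is_derive r t (- beta * r t)).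
  { intros t ht. unfold r. eapply deq. apply is_derive_div; auto.
    apply dminus. apply Dja; auto. apply dmult. apply dconst. unfold S. apply dplus; [apply Dja|apply Djr]; auto.
    unfold S. apply dplus; [apply Dja|apply Djr]; auto.
    unfold S in *. req. unfold Fa, Fr. field. apply Snz. }
  assert (Hr : forall t, 0 <= t -> r t = r 0 * exp (- (beta * t))).
  { intros t ht.
    assert (h : r 0 * exp (beta * 0) = r t * exp (beta * t)).
    { apply (constf (fun u => r u * exp (beta * u)) (fun _ => 0)); auto.
      - intros x hx. eapply deq. apply dmult. apply Dr; lra. apply dexp. apply dmult. apply dconst. apply did.
        req. ring.
      - intros x _. ctac. }
    rewrite Rmult_0_r, exp_0, Rmult_1_r in h. rewrite h, exp_Ropp. field.
    apply Rgt_not_eq, exp_pos. }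
  set (r0 := r 0) in *.
  assert (Hja : forall t, ja t = S t * (xa + r t)).
  { intros t. unfold r. field. auto. }
  assert (Hjr : forall t, jr t = S t * (1 - xa - r t)).
  { intros t. unfold r, S. field. apply Snz. }
  assert (r0b : - xa <= r0 <= 1 - xa).
  { pose proof (Hja 0) as h1. pose proof (Hjr 0) as h2. change (r 0) with r0 in h1, h2. rewrite ja0 in h1; rewrite jr0 in h2.
    split.
    - assert (0 <= xa + r0). apply (pos_of_prod (S 0)); auto. lra. lra.
    - assert (0 <= 1 - xa - r0). apply (pos_of_prod (S 0)); auto. lra. lra. }
  assert (Pa : forall t, 0 <= t -> 0 <= ja t).
  { intros t ht. rewrite Hja, Hr by auto.
    assert (hbt : 0 <= beta * t) by (apply Rmult_le_pos; lra).
    destruct (exp_neg_le1 (beta * t) hbt) as [e1 e2].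
    apply Rmult_le_pos. left; apply Spos.
    replace (xa + r0 * exp (- (beta * t))) with ((1 - exp (- (beta * t))) * xa + exp (- (beta * t)) * (xa + r0)) by ring.
    apply convex_nonneg; lra. }
  assert (Pr : forall t, 0 <= t -> 0 <= jr t).
  { intros t ht. rewrite Hjr, Hr by auto.
    assert (hbt : 0 <= beta * t) by (apply Rmult_le_pos; lra).
    destruct (exp_neg_le1 (beta * t) hbt) as [e1 e2].
    apply Rmult_le_pos. left; apply Spos.
    replace (1 - xa - r0 * exp (- (beta * t))) with ((1 - exp (- (beta * t))) * (1 - xa) + exp (- (beta * t)) * (1 - xa - r0)) by ring.
    apply convex_nonneg; lra. }
  assert (Qa : forall t, 0 <= t -> ja t <= xa).
  { intros t ht.
    pose proof (lin_pos (fun u => xa - ja u) (fun u => - beta * S u + betaa * ja u - alpha)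
                  (fun _ => alpha * xa) t) as HL.
    assert (HL' : xa - ja 0 <= (xa - ja t) * exp (- RInt (fun u => - beta * S u + betaa * ja u - alpha) 0 t)).
    { apply HL; auto.
      - intros u. ctac.
      - intros u. unfold S. ctac.
      - intros u hu. eapply deq. apply dminus. apply dconst. apply Dja; auto.
        unfold Fa, S. req. ring.
      - intros; apply Rmult_le_pos; lra. }
    pose proof (exp_pos (- RInt (fun u => - beta * S u + betaa * ja u - alpha) 0 t)).
    rewrite ja0 in HL'.
    assert (0 <= xa - ja t). apply (pos_of_prod (exp (- RInt (fun u => - beta * S u + betaa * ja u - alpha) 0 t))); auto.
    rewrite Rmult_comm; lra. lra. }
  assert (Qr : forall t, 0 <= t -> jr t <= 1 - xa).
  { intros t ht.
    pose proof (lin_pos (fun u => 1 - xa - jr u) (fun u => - beta * S u - alpha)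
                  (fun u => betaa * (xa - ja u) * jr u + alpha * (1 - xa)) t) as HL.
    assert (HL' : 1 - xa - jr 0 <= (1 - xa - jr t) * exp (- RInt (fun u => - beta * S u - alpha) 0 t)).
    { apply HL; auto.
      - intros u. ctac.
      - intros u. unfold S. ctac.
      - intros u hu. eapply deq. apply dminus. apply dconst. apply Djr; auto.
        unfold Fr, S. req. ring.
      - intros u hu. apply Rplus_le_le_0_compat. apply Rmult_le_pos. apply Rmult_le_pos. lra.
        pose proof (Qa u hu); lra. auto. apply Rmult_le_pos; lra. }
    pose proof (exp_pos (- RInt (fun u => - beta * S u - alpha) 0 t)).
    rewrite jr0 in HL'.
    assert (0 <= 1 - xa - jr t). apply (pos_of_prod (exp (- RInt (fun u => - beta * S u - alpha) 0 t))); auto.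
    rewrite Rmult_comm; lra. lra. }
  exists S, r0. split; [|split; [|split; [|split]]].
  - auto.
  - intros t ht. split. auto. pose proof (Qa t ht). pose proof (Qr t ht). unfold S. lra.
  - lra.
  - intros t ht. rewrite <- Ea, <- Er, <- Hr by auto. auto.
  - intros t ht. eapply deq. unfold S at 1. apply dplus; [apply Dja|apply Djr]; auto.
    rewrite <- Hr by lra. unfold k, lam. 
    assert (Hd2 : ja t - xa * S t = r t * S t) by (unfold r; field; auto).
    unfold S in Hd2. unfold Fa, Fr, S. req. 
    assert (Hd3 : betaa * r t * (ja t + jr t) = betaa * (ja t - xa * (ja t + jr t))) by (rewrite Hd2; ring).
    rewrite Hd3. ring.
Qed.

Lemma exp_neg_bound x : 0 <= x -> exp (- x) * (1 + x) <= 1.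
Proof.
  intros hx. pose proof (exp_ineq1_le x). pose proof (exp_pos x).
  rewrite exp_Ropp. apply (Rmult_le_reg_l (exp x)); auto.
  rewrite <- Rmult_assoc, Rinv_r by lra. lra.
Qed.

Lemma lim_expneg c : 0 < c -> is_lim (fun t => exp (- (c * t))) p_infty 0.
Proof.
  intros hc. apply is_lim_spec. intros eps. simpl.
  exists (/ (c * eps)). intros t ht.
  assert (hce : 0 < c * eps) by (apply Rmult_lt_0_compat; [lra | apply cond_pos]).
  assert (hi : 0 < / (c * eps)) by (apply Rinv_0_lt_compat; auto).
  assert (0 <= c * t) by (apply Rmult_le_pos; lra).
  pose proof (exp_neg_bound (c * t) H). pose proof (exp_pos (- (c * t))).
  rewrite Rminus_0_r, Rabs_pos_eq by lra.
  assert (h1 : c * t * eps > 1).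
  { apply (Rmult_lt_compat_l (c * eps)) in ht; auto.
    rewrite Rinv_r in ht by lra. lra. }
  pose proof (cond_pos eps). nra.
Qed.

Lemma conv_nonpos beta betaa alpha lam k r0 (S : R -> R) :
  0 < beta -> 0 < betaa -> 0 < alpha -> k = lam + alpha -> lam <= 0 ->
  (forall t, continuous S t) -> (forall t, 0 <= t -> 0 < S t <= 1) -> -1 <= r0 <= 1 ->
  (forall t, 0 < t -> is_derive S t
     (S t * (lam - k * S t + betaa * (r0 * exp (- (beta * t))) * S t))) ->
  is_lim S p_infty 0.
Proof.
  intros hb hba hal hk hlam CS SB r0b DS.
  set (T := 2 * betaa / (alpha * beta)).
  assert (hT : 0 < T).
  { unfold T. apply Rmult_lt_0_compat. lra. apply Rinv_0_lt_compat, Rmult_lt_0_compat; lra. }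
  assert (hTT : alpha * beta * T = 2 * betaa) by (unfold T; field; lra).
  assert (Snz : forall t, 0 <= t -> S t <> 0) by (intros t ht; pose proof (SB t ht); lra).
  assert (key : forall t, T <= t -> / S T + alpha / 2 * (t - T) <= / S t).
  { intros t ht.
    pose proof (mono (fun u => / S u - alpha / 2 * u)
      (fun u => - (S u * (lam - k * S u + betaa * (r0 * exp (- (beta * u))) * S u)) / S u ^ 2 - alpha / 2)
      T t ht) as HM.
    assert (/ S T - alpha / 2 * T <= / S t - alpha / 2 * t); [|lra].
    apply HM.
    - intros x hx. eapply deq. apply dminus. apply dinv. apply DS; lra. apply Snz; lra.
      apply dmult. apply dconst. apply did. req. ring.
    - intros x hx. ctac. apply Snz; lra.
    - intros x hx. destruct (SB x) as [s1 s2]; [lra|].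
      set (s := S x) in *. set (e := exp (- (beta * x))).
      assert (he : 0 < e) by apply exp_pos.
      assert (he2 : e * (1 + beta * x) <= 1) by (apply exp_neg_bound; nra).
      assert (hbx : alpha * beta * x >= 2 * betaa).
      { rewrite <- hTT. apply Rle_ge. apply Rmult_le_compat_l; [nra | lra]. }
      assert (h3 : betaa * r0 * e <= alpha / 2).
      { assert (betaa * e <= alpha / 2).
        { assert (h6 : e * (beta * x) <= 1) by nra.
          assert (h7 : e * (alpha * beta * x) <= alpha).
          { replace (e * (alpha * beta * x)) with (alpha * (e * (beta * x))) by ring.
            rewrite <- (Rmult_1_r alpha) at 2. apply Rmult_le_compat_l; lra. }
          assert (h8 : e * (alpha * beta * x) >= e * (2 * betaa)).
          { apply Rle_ge, Rmult_le_compat_l; lra. }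
          lra. }
        assert (betaa * r0 * e <= betaa * 1 * e).
        { apply Rmult_le_compat_r; [lra|]. apply Rmult_le_compat_l; lra. }
        lra. }
      assert (h4 : - lam >= - lam * s) by nra.
      assert (h5 : - lam + k * s - betaa * (r0 * e) * s >= alpha / 2 * s) by nra.
      replace (- (s * (lam - k * s + betaa * (r0 * e) * s)) / s ^ 2 - alpha / 2)
        with ((- lam + k * s - betaa * (r0 * e) * s - alpha / 2 * s) / s) by (field; lra).
      apply Rmult_le_pos; [lra|]. left; apply Rinv_0_lt_compat; lra. }
  assert (hzT : 0 < / S T) by (apply Rinv_0_lt_compat; apply SB; lra).
  assert (Hz : is_lim (fun t => / S t) p_infty p_infty).
  { apply is_lim_spec. intros M. simpl.
    exists (T + 2 * Rabs M / alpha). intros t ht.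
    assert (T <= t).
    { assert (0 <= 2 * Rabs M / alpha).
      { apply Rmult_le_pos. pose proof (Rabs_pos M); lra. left; apply Rinv_0_lt_compat; lra. }
      lra. }
    pose proof (key t H).
    assert (alpha / 2 * (t - T) > Rabs M).
    { assert (t - T > 2 * Rabs M / alpha) by lra.
      apply (Rmult_gt_compat_l (alpha / 2)) in H1; [|lra].
      replace (alpha / 2 * (2 * Rabs M / alpha)) with (Rabs M) in H1 by (field; lra). lra. }
    pose proof (Rle_abs M). lra. }
  pose proof (is_lim_inv _ _ _ Hz) as Hi.
  apply is_lim_ext_loc with (fun t => / / S t).
  - exists 0. intros t ht. rewrite Rinv_inv. auto.
  - apply Hi. discriminate.
Qed.

Lemma limP (f g : R -> R) (a b : R) : is_lim f p_infty a -> is_lim g p_infty b ->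
  is_lim (fun t => f t + g t) p_infty (a + b).
Proof. intros. eapply is_lim_plus; eauto. reflexivity. Qed.
Lemma limM (f g : R -> R) (a b : R) : is_lim f p_infty a -> is_lim g p_infty b ->
  is_lim (fun t => f t * g t) p_infty (a * b).
Proof. intros. apply (is_lim_mult f g p_infty a b); auto. exact I. Qed.
Lemma limC (c : R) : is_lim (fun _ => c) p_infty c.
Proof. apply is_lim_const. Qed.
Lemma limE (f : R -> R) (a b : R) : is_lim f p_infty a -> a = b -> is_lim f p_infty b.
Proof. intros h <-. auto. Qed.

Lemma conv_pos beta betaa alpha lam k r0 (S : R -> R) :
  0 < beta -> 0 < betaa -> 0 < alpha -> k = lam + alpha -> 0 < lam -> lam < beta ->
  (forall t, continuous S t) -> (forall t, 0 <= t -> 0 < S t <= 1) ->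
  (forall t, 0 < t -> is_derive S t
     (S t * (lam - k * S t + betaa * (r0 * exp (- (beta * t))) * S t))) ->
  is_lim S p_infty (lam / k).
Proof.
  intros hb hba hal hk hlam hlb CS SB DS.
  assert (Snz : forall t, 0 <= t -> S t <> 0) by (intros t ht; pose proof (SB t ht); lra).
  set (C := / S 0 - k / lam + betaa * r0 / (lam - beta)).
  set (W := fun t => exp (- (lam * t)) * C - betaa * r0 * exp (- (beta * t)) / (lam - beta)).
  assert (HW : forall t, 0 <= t -> / S t = k / lam + W t).
  { intros t ht.
    assert (h : (/ S 0 - k / lam - W 0) * exp (lam * 0) = (/ S t - k / lam - W t) * exp (lam * t)).
    { apply (constf (fun u => (/ S u - k / lam - W u) * exp (lam * u)) (fun _ => 0)); auto.
      - intros x hx. unfold W. eapply deq.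
        apply dmult. apply dminus. apply dminus. apply dinv. apply DS; lra. apply Snz; lra.
        apply dconst. apply dminus. apply dmult. apply dexp. apply dopp. apply dmult. apply dconst. apply did.
        apply dconst. unfold Rdiv. apply dmult. apply dmult. apply dconst. apply dexp. apply dopp.
        apply dmult. apply dconst. apply did. apply dconst.
        apply dexp. apply dmult. apply dconst. apply did.
        req. pose proof (Snz x ltac:(lra)) as hs. revert hs.
        generalize (S x), (exp (lam*x)), (exp (-(lam*x))), (exp (-(beta*x))). intros s E1 E2 E3 hs.
        field. split; [lra|]. split; [lra|]. auto.
      - intros x hx. unfold W. ctac. apply Snz; lra. }
    assert (W 0 = / S 0 - k / lam).
    { unfold W, C. repeat rewrite Rmult_0_r. repeat rewrite Ropp_0. rewrite exp_0. generalize (/ S 0). intro z. field. lra. }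
    rewrite H, Rmult_0_r, exp_0 in h.
    assert (hE : exp (lam * t) <> 0) by (apply Rgt_not_eq, exp_pos).
    assert ((/ S t - k / lam - W t) = 0).
    { apply (Rmult_eq_reg_r (exp (lam * t))); auto. lra. }
    lra. }
  assert (HWl : is_lim W p_infty 0).
  { unfold W.
    apply limE with (0 * C + - (betaa * r0) * 0 * / (lam - beta)); [|ring].
    apply is_lim_ext with (fun t => exp (- (lam * t)) * C + - (betaa * r0) * exp (- (beta * t)) * / (lam - beta)).
    { intros; unfold Rdiv; ring. }
    apply limP. apply limM. apply lim_expneg; auto. apply limC.
    apply limM. apply limM. apply limC. apply lim_expneg; auto. apply limC. }
  assert (Hz : is_lim (fun t => / S t) p_infty (k / lam)).
  { apply is_lim_ext_loc with (fun t => k / lam + W t).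
    exists 0. intros t ht. rewrite HW; auto. lra.
    apply limE with (k / lam + 0); [|ring]. apply limP. apply limC. auto. }
  apply is_lim_ext_loc with (fun t => / / S t).
  - exists 0. intros t ht. rewrite Rinv_inv. auto.
  - apply limE with (/ (k / lam)).
    + apply (is_lim_inv (fun t => / S t) p_infty (k / lam)); auto.
      intro h. injection h. intro h2. assert (k / lam > 0). apply Rdiv_lt_0_compat; lra. lra.
    + field. lra.
Qed.

Lemma Fa_diag beta betaa alpha xa s :
  Fa beta betaa alpha xa (xa * s) ((1 - xa) * s) =
  xa * s * ((beta - betaa * xa - alpha) - (beta - betaa * xa) * s).
Proof. unfold Fa. ring. Qed.
Lemma Fr_diag beta betaa alpha xa s :
  Fr beta betaa alpha xa (xa * s) ((1 - xa) * s) =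
  (1 - xa) * s * ((beta - betaa * xa - alpha) - (beta - betaa * xa) * s).
Proof. unfold Fr. ring. Qed.

Lemma lim_from_S (S f : R -> R) (s beta c r0 : R) : 0 < beta ->
  is_lim S p_infty s -> (forall t, 0 <= t -> f t = S t * (c + r0 * exp (- (beta * t)))) ->
  is_lim f p_infty (c * s).
Proof.
  intros hb hS hf.
  apply is_lim_ext_loc with (fun t => S t * (c + r0 * exp (- (beta * t)))).
  { exists 0. intros t ht. rewrite hf; auto. lra. }
  apply limE with (s * (c + r0 * 0)); [|ring].
  apply limM; auto. apply limP. apply limC. apply limM. apply limC. apply lim_expneg; auto.
Qed.

Lemma conv_all beta betaa alpha xa ia ir :
  0 < beta -> 0 < betaa -> 0 < alpha -> 0 <= xa <= 1 ->
  is_solution beta betaa alpha xa ia ir -> inGamma xa (ia 0) (ir 0) ->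
  ~ is_equilibrium beta betaa alpha xa (ia 0) (ir 0) ->
  let lam := beta - betaa * xa - alpha in
  let s := (if Rle_dec lam 0 then 0 else lam / (lam + alpha)) in
  is_lim ia p_infty (xa * s) /\ is_lim ir p_infty ((1 - xa) * s).
Proof.
  intros hb hba hal hxa hsol hG hE lam s.
  destruct (setup beta betaa alpha xa ia ir hb hba hal hxa hsol hG hE)
    as [S [r0 [CS [SB [r0b [Hf DS]]]]]].
  assert (HS : is_lim S p_infty s).
  { unfold s. destruct (Rle_dec lam 0) as [hl|hl].
    - apply (conv_nonpos beta betaa alpha lam (beta - betaa * xa) r0 S); auto.
      unfold lam; ring.
    - replace (lam + alpha) with (beta - betaa * xa) by (unfold lam; ring).
      apply (conv_pos beta betaa alpha lam (beta - betaa * xa) r0 S); auto.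
      unfold lam; ring. lra. unfold lam. assert (0 <= betaa * xa) by (apply Rmult_le_pos; lra). lra. }
  split.
  - apply (lim_from_S S ia s beta xa r0); auto. intros t ht; apply Hf; auto.
  - apply (lim_from_S S ir s beta (1 - xa) (- r0)); auto.
    intros t ht. rewrite (proj2 (Hf t ht)). ring.
Qed.

Lemma cont_at_right (f : R -> R) : continuous f 0 -> filterlim f (at_right 0) (locally (f 0)).
Proof.
  intros c. eapply filterlim_filter_le_1; [|exact c].
  intros P hP. unfold at_right, within. apply filter_imp with P; auto.
Qed.

Lemma counter beta betaa alpha xa :
  0 < beta -> 0 < betaa -> 0 < alpha -> 0 <= xa <= 1 ->
  0 < beta - betaa * xa - alpha -> ~ GAS beta betaa alpha xa 0 0.
Proof.
  intros hb hba hal hxa hlam.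
  set (lam := beta - betaa * xa - alpha) in *.
  set (k := beta - betaa * xa).
  assert (hk : k = lam + alpha) by (unfold k, lam; ring).
  assert (hkp : 0 < k) by lra.
  pose (sol := fun t => lam / (k * (1 + exp (- (lam * t))))).
  assert (hden : forall t, k * (1 + exp (- (lam * t))) <> 0).
  { intros t. pose proof (exp_pos (- (lam * t))). apply Rgt_not_eq. apply Rmult_lt_0_compat; lra. }
  assert (Dsol : forall t, is_derive sol t (sol t * (lam - k * sol t))).
  { intros t. unfold sol, Rdiv. eapply deq.
    apply dmult. apply dconst. apply dinv; auto. apply dmult. apply dconst. apply dplus. apply dconst.
    apply dexp. apply dopp. apply dmult. apply dconst. apply did.
    req. pose proof (exp_pos (- (lam * t))) as H. revert H. generalize (exp (- (lam * t))). intros e he.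
    field. repeat split; lra. }
  assert (Csol : forall t, continuous sol t).
  { intros t. apply (ex_derive_continuous (K:=R_AbsRing) (V:=R_NormedModule)). eexists; apply Dsol. }
  assert (Lsol : is_lim sol p_infty (lam / k)).
  { unfold sol, Rdiv. apply limE with (lam * / (k * (1 + 0))); [|f_equal; f_equal; ring].
    apply limM. apply limC.
    apply limE with (Rbar_inv (k * (1 + 0))). 2: reflexivity.
    apply (is_lim_inv (fun t => k * (1 + exp (- (lam * t)))) p_infty (k * (1 + 0))).
    apply limM. apply limC. apply limP. apply limC. apply lim_expneg; auto.
    intro h. injection h. lra. }
  assert (hs0 : sol 0 = lam / (2 * k)).
  { unfold sol. rewrite Rmult_0_r, Ropp_0, exp_0. f_equal. ring. }
  intros [_ HG].
  destruct (HG (fun t => xa * sol t) (fun t => (1 - xa) * sol t)) as [L1 L2].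
  - split; [|split].
    + intros t _. split.
      * eapply deq. apply dmult. apply dconst. apply Dsol.
        rewrite Fa_diag. fold k. fold lam. req. rewrite hk. ring.
      * eapply deq. apply dmult. apply dconst. apply Dsol.
        rewrite Fr_diag. fold k. req. rewrite hk. ring.
    + apply cont_at_right. apply cmult. apply cconst. auto.
    + apply cont_at_right. apply cmult. apply cconst. auto.
  - assert (0 < lam / (2 * k)) by (apply Rdiv_lt_0_compat; lra).
    assert (lam / (2 * k) <= 1).
    { apply Rmult_le_reg_r with (2 * k). lra. unfold Rdiv. rewrite Rmult_assoc, Rinv_l; lra. }
    rewrite hs0. split; split; nra.
  - intros [_ [e1 e2]]. rewrite Fa_diag in e1. rewrite Fr_diag in e2. fold k in e1, e2.
    rewrite hs0 in e1, e2.
    assert (h : k - alpha - k * (lam / (2 * k)) = lam / 2) by (rewrite hk; field; lra).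
    rewrite h in e1, e2.
    assert (0 < lam / (2 * k)) by (apply Rdiv_lt_0_compat; lra).
    assert (xa = 0).
    { destruct (Rmult_integral _ _ e1) as [h1|h1]; [|lra].
      destruct (Rmult_integral _ _ h1) as [h2|h2]; lra. }
    assert (1 - xa = 0).
    { destruct (Rmult_integral _ _ e2) as [h1|h1]; [|lra].
      destruct (Rmult_integral _ _ h1) as [h2|h2]; lra. }
    lra.
  - assert (M1 : is_lim (fun t => xa * sol t) p_infty (xa * (lam / k))) by (apply limM; [apply limC | auto]).
    assert (M2 : is_lim (fun t => (1 - xa) * sol t) p_infty ((1 - xa) * (lam / k))) by (apply limM; [apply limC | auto]).
    apply is_lim_unique in M1, M2, L1, L2.
    rewrite M1 in L1. rewrite M2 in L2. injection L1. injection L2. intros h2 h1.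
    assert (0 < lam / k) by (apply Rdiv_lt_0_compat; lra).
    destruct (Rmult_integral _ _ h1); [|lra].
    destruct (Rmult_integral _ _ h2); lra.
Qed.

Lemma cond_iff beta betaa alpha xa : 0 < alpha ->
  (beta / alpha <= 1 + betaa * xa / alpha <-> beta - betaa * xa - alpha <= 0).
Proof.
  intros hal. split; intros h.
  - apply Rmult_le_compat_r with (r := alpha) in h; [|lra].
    replace (beta / alpha * alpha) with beta in h by (field; lra).
    replace ((1 + betaa * xa / alpha) * alpha) with (alpha + betaa * xa) in h by (field; lra). lra.
  - apply Rmult_le_reg_r with alpha; auto.
    replace (beta / alpha * alpha) with beta by (field; lra).
    replace ((1 + betaa * xa / alpha) * alpha) with (alpha + betaa * xa) by (field; lra). lra.
Qed.

Theorem theorem2 (beta betaa alpha xa : R) :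
  0 < beta -> 0 < betaa -> 0 < alpha -> 0 <= xa <= 1 ->
  (GAS beta betaa alpha xa 0 0 <-> beta / alpha <= 1 + betaa * xa / alpha) /\
  (beta / alpha > 1 + betaa * xa / alpha ->
   let lam := beta - betaa * xa - alpha in
   let ea := xa * (lam / (lam + alpha)) in
   let er := (1 - xa) * (lam / (lam + alpha)) in
   ((0 < xa < 1 ->
     interior_pt xa ea er /\
     forall pa pr, interior_pt xa pa pr ->
       is_equilibrium beta betaa alpha xa pa pr -> pa = ea /\ pr = er) /\
    GAS beta betaa alpha xa ea er)).
Proof.
  intros hb hba hal hxa.
  pose proof (cond_iff beta betaa alpha xa hal) as CI.
  split.
  - split.
    + intros hG. apply CI. destruct (Rle_dec (beta - betaa * xa - alpha) 0) as [h|h]; auto.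
      exfalso. apply (counter beta betaa alpha xa); auto. lra.
    + intros hc. apply CI in hc. split.
      * split. split; split; lra. unfold Fa, Fr. split; ring.
      * intros ia ir hsol hG hE.
        destruct (conv_all beta betaa alpha xa ia ir hb hba hal hxa hsol hG hE) as [L1 L2].
        cbv zeta in L1, L2. destruct (Rle_dec (beta - betaa * xa - alpha) 0); [|lra].
        rewrite Rmult_0_r in L1, L2. auto.
  - intros hc. assert (hl : 0 < beta - betaa * xa - alpha).
    { destruct (Rle_dec (beta - betaa * xa - alpha) 0) as [h|h]. apply CI in h. lra. lra. }
    cbv zeta.
    set (lam := beta - betaa * xa - alpha) in *.
    assert (hs : 0 < lam / (lam + alpha) < 1).
    { split. apply Rdiv_lt_0_compat; lra.
      apply Rmult_lt_reg_r with (lam + alpha). lra. unfold Rdiv. rewrite Rmult_assoc, Rinv_l; lra. }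
    assert (EQ : is_equilibrium beta betaa alpha xa (xa * (lam / (lam + alpha))) ((1 - xa) * (lam / (lam + alpha)))).
    { split. split; split; nra.
      rewrite Fa_diag, Fr_diag. fold lam.
      replace (beta - betaa * xa) with (lam + alpha) by (unfold lam; ring).
      assert (lam - (lam + alpha) * (lam / (lam + alpha)) = 0) by (field; lra).
      rewrite H. split; ring. }
    split.
    + intros hx. split.
      * split; split; nra.
      * intros pa pr [[p1 p2] [q1 q2]] [_ [ea eb]].
        set (Sv := pa + pr). set (Dv := pa - xa * Sv).
        assert (I1 : (1 - xa) * Fa beta betaa alpha xa pa pr - xa * Fr beta betaa alpha xa pa pr
                   = - (beta * Sv + betaa * (xa - pa) + alpha) * Dv) by (unfold Fa, Fr, Dv, Sv; ring).
        assert (I2 : Fa beta betaa alpha xa pa pr + Fr beta betaa alpha xa pa pr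
                   = Sv * ((lam + alpha) * (1 - Sv) - alpha + betaa * Dv)) by (unfold Fa, Fr, Dv, Sv, lam; ring).
        rewrite ea, eb in I1, I2.
        assert (hc1 : 0 < beta * Sv + betaa * (xa - pa) + alpha).
        { assert (0 <= beta * Sv) by (apply Rmult_le_pos; unfold Sv; lra).
          assert (0 <= betaa * (xa - pa)) by (apply Rmult_le_pos; lra). lra. }
        assert (hD : Dv = 0).
        { assert (h : (beta * Sv + betaa * (xa - pa) + alpha) * Dv = 0) by lra.
          destruct (Rmult_integral _ _ h); lra. }
        rewrite hD in I2.
        assert (hSv : (lam + alpha) * (1 - Sv) - alpha = 0).
        { assert (h : Sv * ((lam + alpha) * (1 - Sv) - alpha) = 0) by lra.
          destruct (Rmult_integral _ _ h) as [h'|h']; [unfold Sv in h'; lra | exact h']. }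
        assert (hSv2 : Sv = lam / (lam + alpha)).
        { apply Rmult_eq_reg_r with (lam + alpha). 2: lra. unfold Rdiv.
          rewrite Rmult_assoc, Rinv_l by lra. lra. }
        unfold Dv in hD. rewrite <- hSv2. unfold Sv in *. split; lra.
    + split; auto.
      intros ia ir hsol hG hE.
      destruct (conv_all beta betaa alpha xa ia ir hb hba hal hxa hsol hG hE) as [L1 L2].
      cbv zeta in L1, L2. fold lam in L1, L2. destruct (Rle_dec lam 0); [lra|]. auto.
Qed.
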